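(* Let $G=(V,E)$ be a directed unweighted graph with diameter $D=3h+z$, where $h\ge1$ and $z\in\{0,1,2\}$, and let $s\in[1,n]$. If $\hat D$ is the output of Approx-Diam$(G)$, then $2h+z\le\hat D\le 3h+z$.
   Context: $d(u,v)$ is the shortest-path distance from $u$ to $v$. $N_s^{\mathrm{out}}(v)$ (resp. $N_s^{\mathrm{in}}(v)$) is the set of the $s$ vertices $u$ with smallest $d(v,u)$ (resp. $d(u,v)$), ties broken by smaller id; $d_s^{\mathrm{out}}(v)=\max_{u\in N_s^{\mathrm{out}}(v)}d(v,u)$, $d_s^{\mathrm{in}}(v)=\max_{u\in N_s^{\mathrm{in}}(v)}d(u,v)$. $B^{\mathrm{out}}(v,r)=\{u: d(v,u)\le r\}$, $B^{\mathrm{in}}(v,r)=\{u:d(u,v)\le r\}$. The Aingworth et al. estimate AGG$_s(G)$ is the maximum of $d^{\mathrm{out}}(w)$, $\max_{u\in N_s^{\mathrm{out}}(w)}d^{\mathrm{in}}(u)$ and $\max_{u\in S}d^{\mathrm{out}}(u)$, where $w$ maximizes $d_s^{\mathrm{out}}$, $S$ is a set meeting every $N_s^{\mathrm{out}}(v)$, $d^{\mathrm{out}}(v)=\max_u d(v,u)$, $d^{\mathrm{in}}(v)=\max_u d(u,v)$. Approx-Diam$(G)$: set $\hat D=\max(\mathrm{AGG}_s(G),\mathrm{AGG}_s(G^R))$, where $G^R$ is $G$ with edges reversed; then for every ordered pair of distinct vertices $(u,v)$ such that $B^{\mathrm{out}}(u,d_s^{\mathrm{out}}(u)-1)\cap B^{\mathrm{in}}(v,d_s^{\mathrm{in}}(v)-1)=\emptyset$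 and there is no edge $(u',v')\in E$ with $u'\in B^{\mathrm{out}}(u,d_s^{\mathrm{out}}(u)-1)$, $v'\in B^{\mathrm{in}}(v,d_s^{\mathrm{in}}(v)-1)$, set $\hat D\gets\max(\hat D,d_s^{\mathrm{out}}(u)+d_s^{\mathrm{in}}(v))$; output $\hat D$. *)

(* Defs.v *)
From mathcomp Require Import all_boot.
Set Implicit Arguments. Unset Strict Implicit. Unset Printing Implicit Defensive.

Section ApproxDiam.
Variable n : nat.
Implicit Types (e : rel 'I_n) (u v x w : 'I_n) (s k : nat).

Fixpoint reach e k u : {set 'I_n} :=
  if k is k'.+1 then reach e k' u :|: [set y | [exists x in reach e k' u, e x y]]
  else [set u].

(* shortest-path distance d(u,v): least k with v reachable within k steps
   (a shortest path has < n edges); equals n if v is unreachable from u,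
   which never happens under the strong-connectivity hypothesis below. *)
Definition dist e u v : nat := find (fun k => v \in reach e k u) (iota 0 n).

Definition strongly_connected e := forall u v, connect e u v.

Definition diam e : nat := \max_(u : 'I_n) \max_(v : 'I_n) dist e u v.

Definition ecc_out e v : nat := \max_(u : 'I_n) dist e v u.
Definition ecc_in e v : nat := \max_(u : 'I_n) dist e u v.

Definition Nout e s v : seq 'I_n :=
  take s (sort (fun a b => (dist e v a < dist e v b) ||
                           ((dist e v a == dist e v b) && (a <= b)))
               (enum 'I_n)).
Definition Nin e s v : seq 'I_n :=
  take s (sort (fun a b => (dist e a v < dist e b v) ||
                           ((dist e a v == dist e b v) && (a <= b)))
               (enum 'I_n)).

Definition ds_out e s v : nat := \max_(u <- Nout e s v) dist e v u.
Definition ds_in e s v : nat := \max_(u <- Nin e s v) dist e u v.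

(* Aingworth et al. estimate, for a choice of w and S *)
Definition AGG_choice_ok e s w (S : {set 'I_n}) : Prop :=
  (forall x, ds_out e s x <= ds_out e s w) /\
  (forall x, has (fun y => y \in S) (Nout e s x)).

Definition AGG e s w (S : {set 'I_n}) : nat :=
  maxn (ecc_out e w)
       (maxn (\max_(u <- Nout e s w) ecc_in e u) (\max_(u in S) ecc_out e u)).

Definition revg e : rel 'I_n := fun x y => e y x.

(* B^out(u, d_s^out(u) - 1) and B^in(v, d_s^in(v) - 1), with integer radius
   (so the ball is empty when the radius is -1) *)
Definition Bout_s e s u : {set 'I_n} := [set x | dist e u x < ds_out e s u].
Definition Bin_s e s v : {set 'I_n} := [set x | dist e x v < ds_in e s v].

Definition pair_ok e s u v : bool :=
  [&& u != v, [disjoint Bout_s e s u & Bin_s e s v] &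
      ~~ [exists u', exists v',
            [&& u' \in Bout_s e s u, v' \in Bin_s e s v & e u' v']]].

Definition pair_term e s : nat :=
  \max_(u : 'I_n) \max_(v : 'I_n | pair_ok e s u v) (ds_out e s u + ds_in e s v).

(* output of Approx-Diam(G) for the choices (w,S) in G and (wR,SR) in G^R *)
Definition approx_diam e s w S wR SR : nat :=
  maxn (maxn (AGG e s w S) (AGG (revg e) s wR SR)) (pair_term e s).

End ApproxDiam.

(* Main.v *)
Require Import Defs.
From mathcomp Require Import all_boot.
From mathcomp Require Import zify.
From Stdlib Require Import FunctionalExtensionality.
Set Implicit Arguments. Unset Strict Implicit. Unset Printing Implicit Defensive.

Definition W (n : nat) (e : rel 'I_n) k u v :=
  exists p : seq 'I_n, [/\ size p <= k, path e u p & last u p = v].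

Lemma reachP (n : nat) (e : rel 'I_n) k u v : v \in reach e k u <-> W e k u v.
Proof.
elim: k v => [|k IH] v /=.
  rewrite inE; split; first by move/eqP->; exists [::].
  by case=> p [Hs Hp Hl]; case: p Hs Hp Hl => //= _ _ <-.
rewrite inE in_set; split.
  case/orP=> [/IH [p [Hs Hp Hl]]|/existsP [x /andP [/IH [p [Hs Hp Hl]] Hx]]].
    by exists p; split=> //; apply: leqW.
  exists (rcons p v); split.
  - by rewrite size_rcons.
  - by rewrite rcons_path Hp Hl.
  - by rewrite last_rcons.
case=> p [Hs Hp Hl]; case/lastP: p Hs Hp Hl => [|p y] Hs Hp Hl.
  by apply/orP; left; apply/IH; exists [::].
apply/orP; right; apply/existsP; exists (last u p).
rewrite rcons_path in Hp; case/andP: Hp => Hp He.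
rewrite last_rcons in Hl; subst y.
rewrite He andbT; apply/IH; exists p; split=> //.
by rewrite size_rcons in Hs.
Qed.

Lemma W_mono (n : nat) (e : rel 'I_n) k l u v : k <= l -> W e k u v -> W e l u v.
Proof. by move=> Hkl [p [Hs Hp Hl]]; exists p; split=> //; apply: leq_trans Hkl. Qed.

Lemma W0 (n : nat) (e : rel 'I_n) u v : W e 0 u v -> u = v.
Proof. by case=> [[|x p]] [] //. Qed.

Lemma W_refl (n : nat) (e : rel 'I_n) k u : W e k u u.
Proof. by exists [::]. Qed.

Lemma W_edge (n : nat) (e : rel 'I_n) u v : e u v -> W e 1 u v.
Proof. by move=> H; exists [:: v]; rewrite /= H. Qed.

Lemma W_cat (n : nat) (e : rel 'I_n) k l u x v :
  W e k u x -> W e l x v -> W e (k + l) u v.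
Proof.
move=> [p [Hs Hp Hl]] [q [Hs' Hq Hl']]; exists (p ++ q); split.
- by rewrite size_cat leq_add.
- by rewrite cat_path Hp Hl Hq.
- by rewrite last_cat Hl.
Qed.

Lemma W_split (n : nat) (e : rel 'I_n) j k u v :
  j <= k -> W e k u v -> exists t, W e j u t /\ W e (k - j) t v.
Proof.
move=> Hjk [p [Hs Hp Hl]]; exists (last u (take j p)); split.
  exists (take j p); split=> //.
  - by rewrite size_take; case: ifP => // /negbT; rewrite -leqNgt.
  - by move: Hp; rewrite -{1}(cat_take_drop j p) cat_path => /andP [].
exists (drop j p); split.
- by rewrite size_drop leq_sub2r.
- by move: Hp; rewrite -{1}(cat_take_drop j p) cat_path => /andP [].
- by rewrite -last_cat cat_take_drop.
Qed.

Lemma W_front (n : nat) (e : rel 'I_n) k u v :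
  W e k.+1 u v -> u = v \/ exists x, e u x /\ W e k x v.
Proof.
case=> [[|x p]] [Hs Hp Hl]; first by left.
right; exists x; case/andP: Hp => He Hp; split=> //; by exists p.
Qed.

Lemma W_rev (n : nat) (e : rel 'I_n) k u v : W e k u v -> W (revg e) k v u.
Proof.
case=> p [Hs Hp Hl]; exists (rev (belast u p)); split.
- by rewrite size_rev size_belast.
- by rewrite -Hl rev_path.
- case/lastP: p Hs Hp Hl => [|p y] Hs Hp Hl /=; first by [].
  by rewrite belast_rcons rev_cons last_rcons.
Qed.

Lemma predS_aux m k : m.+1 <= k -> m <= k.-1.
Proof. by case: k. Qed.

Lemma n_pos (n : nat) (u : 'I_n) : 0 < n.
Proof. by apply: leq_ltn_trans (ltn_ord u). Qed.

Lemma dist_le (n : nat) (e : rel 'I_n) k u v : W e k u v -> k < n -> dist e u v <= k.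
Proof.
move=> Hw Hk; rewrite leqNgt; apply/negP => Hlt.
have := before_find 0 Hlt; rewrite nth_iota // add0n.
by move/negbT/negP; apply; apply/reachP.
Qed.

Lemma W_sc (n : nat) (e : rel 'I_n) u v : strongly_connected e -> W e n.-1 u v.
Proof.
move=> Hsc; case/connectP: (Hsc u v) => p Hp ->.
case: (shortenP Hp) => p' Hp' Hu _.
exists p'; split=> //.
have := max_card (mem (u :: p')); rewrite card_ord (card_uniqP Hu) /=.
exact: predS_aux.
Qed.

Lemma dist_lt (n : nat) (e : rel 'I_n) u v : strongly_connected e -> dist e u v < n.
Proof.
move=> Hsc; rewrite /dist -[X in _ < X](size_iota 0 n) -has_find.
apply/hasP; exists n.-1.
  rewrite mem_iota add0n; have := n_pos u; by case: (n) => [|m] //= _; rewrite ltnSn.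
by apply/reachP; apply: W_sc.
Qed.

Lemma dist_W (n : nat) (e : rel 'I_n) u v : strongly_connected e -> W e (dist e u v) u v.
Proof.
move=> Hsc; have Hlt := dist_lt u v Hsc.
have Hh : has (fun k => v \in reach e k u) (iota 0 n).
  by rewrite has_find size_iota.
have := nth_find 0 Hh; rewrite -/(dist e u v) nth_iota // add0n.
by move/reachP.
Qed.

Lemma dist_tri (n : nat) (e : rel 'I_n) u x v : strongly_connected e ->
  dist e u v <= dist e u x + dist e x v.
Proof.
move=> Hsc; case: (ltnP (dist e u x + dist e x v) n) => H.
  by apply: dist_le => //; apply: W_cat (dist_W _ _ Hsc) (dist_W _ _ Hsc).
by apply: leq_trans (ltnW (dist_lt u v Hsc)) H.
Qed.

Lemma dist_refl (n : nat) (e : rel 'I_n) u : dist e u u = 0.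
Proof. apply/eqP; rewrite -leqn0; apply: dist_le; first exact: W_refl. exact: (n_pos u). Qed.

Lemma dist0 (n : nat) (e : rel 'I_n) u v : strongly_connected e -> dist e u v = 0 -> u = v.
Proof. by move=> Hsc H; apply: (@W0 _ e); rewrite -H; apply: dist_W. Qed.

Lemma dist_edge (n : nat) (e : rel 'I_n) u v : strongly_connected e -> e u v -> dist e u v <= 1.
Proof.
move=> Hsc He; case: (ltnP 1 n) => H; first by apply: dist_le => //; apply: W_edge.
by have := dist_lt u v Hsc; move=> H2; apply: leq_trans (leq_trans H2 H); rewrite leqnSn.
Qed.

Lemma sc_rev (n : nat) (e : rel 'I_n) : strongly_connected e -> strongly_connected (revg e).
Proof.
move=> Hsc u v; have := W_rev (W_sc v u Hsc); case=> p [_ Hp Hl].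
by apply/connectP; exists p.
Qed.

Lemma dist_rev (n : nat) (e : rel 'I_n) u v : strongly_connected e ->
  dist (revg e) u v = dist e v u.
Proof.
move=> Hsc; apply/eqP; rewrite eqn_leq; apply/andP; split.
  by apply: dist_le; [apply: W_rev; apply: dist_W|apply: dist_lt].
apply: dist_le; last by apply: dist_lt; apply: sc_rev.
by apply: (@W_rev _ (revg e)); apply: dist_W; apply: sc_rev.
Qed.

Lemma dist_split (n : nat) (e : rel 'I_n) j u v : strongly_connected e ->
  j <= dist e u v -> exists t, dist e u t = j /\ dist e t v = dist e u v - j.
Proof.
move=> Hsc Hj; case: (W_split Hj (dist_W u v Hsc)) => t [H1 H2].
have Hn := dist_lt u v Hsc.
have L1 : dist e u t <= j by apply: dist_le => //; apply: leq_ltn_trans Hn.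
have L2 : dist e t v <= dist e u v - j.
  by apply: dist_le => //; apply: leq_ltn_trans Hn; apply: leq_subr.
have := dist_tri u t v Hsc => L3.
exists t; split; lia.
Qed.

Lemma dist_step (n : nat) (e : rel 'I_n) t v : strongly_connected e ->
  0 < dist e t v -> exists x, e t x /\ dist e x v < dist e t v.
Proof.
move=> Hsc Hp; have := dist_W t v Hsc; rewrite -{1}(prednK Hp) => /W_front [Heq|[x [Hx Hw]]].
  by move: Hp; rewrite Heq dist_refl.
exists x; split=> //; rewrite -(prednK Hp) ltnS; apply: dist_le => //.
by apply: leq_ltn_trans (leq_pred _) (dist_lt t v Hsc).
Qed.

Lemma Nout_le (n : nat) (e : rel 'I_n) s x y :
  y \in Nout e s x -> dist e x y <= ds_out e s x.
Proof. by move=> H; rewrite /ds_out; apply: leq_bigmax_seq. Qed.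

Lemma Nout_in (n : nat) (e : rel 'I_n) s x y :
  dist e x y < ds_out e s x -> y \in Nout e s x.
Proof.
set ord := (fun a b : 'I_n => (dist e x a < dist e x b) ||
                           ((dist e x a == dist e x b) && (a <= b))).
have tr : transitive ord.
  move=> b a c; rewrite /ord => H1 H2; lia.
have to : total ord.
  move=> a b; rewrite /ord; lia.
set L := sort ord (enum 'I_n).
have Hsorted : sorted ord L by apply: sort_sorted.
have HyL : y \in L by rewrite mem_sort mem_enum.
move=> Hlt; apply/negPn/negP => Hy.
have Hyd : y \in drop s L.
  by move: HyL; rewrite -{1}(cat_take_drop s L) mem_cat (negbTE Hy).
suff : ds_out e s x <= dist e x y by rewrite leqNgt Hlt.
apply/bigmax_leqP_seq => z Hz _.
have Hz' : z \in take s L := Hz.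
have Hzi := nth_index x Hz'.
have Hyi := nth_index x Hyd.
have Hzs : index z (take s L) < size (take s L) by rewrite index_mem.
have Hys : index y (drop s L) < size (drop s L) by rewrite index_mem.
rewrite size_take_min in Hzs; rewrite size_drop in Hys.
have Hzs' : index z (take s L) < s by lia.
rewrite nth_take // in Hzi; rewrite nth_drop in Hyi.
have : ord z y.
  rewrite -Hzi -Hyi; apply: (sorted_ltn_nth tr x Hsorted); rewrite ?inE /=.
  - lia.
  - lia.
  - lia.
rewrite /ord; lia.
Qed.

Lemma Nout_rev (n : nat) (e : rel 'I_n) s v : strongly_connected e ->
  Nout (revg e) s v = Nin e s v.
Proof.
move=> Hsc.
have E : (fun a b : 'I_n => (dist (revg e) v a < dist (revg e) v b) ||
            ((dist (revg e) v a == dist (revg e) v b) && (a <= b))) =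
         (fun a b : 'I_n => (dist e a v < dist e b v) ||
            ((dist e a v == dist e b v) && (a <= b))).
  apply: functional_extensionality => a; apply: functional_extensionality => b.
  by rewrite !(dist_rev _ _ Hsc).
by rewrite /Nout E.
Qed.
Lemma ds_out_rev (n : nat) (e : rel 'I_n) s v : strongly_connected e ->
  ds_out (revg e) s v = ds_in e s v.
Proof.
move=> Hsc; rewrite /ds_out /ds_in Nout_rev //; apply: eq_bigr => u _.
by rewrite (dist_rev _ _ Hsc).
Qed.

Lemma ecc_out_rev (n : nat) (e : rel 'I_n) v : strongly_connected e ->
  ecc_out (revg e) v = ecc_in e v.
Proof. by move=> Hsc; apply: eq_bigr => u _; rewrite (dist_rev _ _ Hsc). Qed.

Lemma ecc_in_rev (n : nat) (e : rel 'I_n) v : strongly_connected e ->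
  ecc_in (revg e) v = ecc_out e v.
Proof. by move=> Hsc; apply: eq_bigr => u _; rewrite (dist_rev _ _ Hsc). Qed.

Lemma ecc_out_diam (n : nat) (e : rel 'I_n) v : ecc_out e v <= diam e.
Proof. exact: (@leq_bigmax _ (fun u => ecc_out e u) v). Qed.

Lemma dist_ecc_out (n : nat) (e : rel 'I_n) u v : dist e u v <= ecc_out e u.
Proof. exact: (@leq_bigmax _ (fun v => dist e u v) v). Qed.

Lemma dist_ecc_in (n : nat) (e : rel 'I_n) u v : dist e u v <= ecc_in e v.
Proof. exact: (@leq_bigmax _ (fun u => dist e u v) u). Qed.

Lemma ecc_in_diam (n : nat) (e : rel 'I_n) v : ecc_in e v <= diam e.
Proof.
apply/bigmax_leqP => u _; apply: leq_trans (dist_ecc_out _ _ _) (ecc_out_diam _ _).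
Qed.

Lemma ds_out_ecc (n : nat) (e : rel 'I_n) s v : ds_out e s v <= ecc_out e v.
Proof. by apply/bigmax_leqP_seq => u _ _; apply: dist_ecc_out. Qed.

Lemma ds_in_ecc (n : nat) (e : rel 'I_n) s v : ds_in e s v <= ecc_in e v.
Proof. by apply/bigmax_leqP_seq => u _ _; apply: dist_ecc_in. Qed.

Lemma pair_bound (n : nat) (e : rel 'I_n) s u v : strongly_connected e ->
  pair_ok e s u v -> ds_out e s u + ds_in e s v <= diam e.
Proof.
move=> Hsc /and3P [Huv Hdisj Hex].
have E1 := ds_out_ecc e s u; have E2 := ds_in_ecc e s v.
have E3 := ecc_out_diam e u; have E4 := ecc_in_diam e v.
have E5 := dist_ecc_out e u v.
case: (posnP (ds_out e s u)) => Hr1; first by lia.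
case: (posnP (ds_in e s v)) => Hr2; first by lia.
suff : ds_out e s u + ds_in e s v <= dist e u v by lia.
rewrite leqNgt; apply/negP => Hlt.
case: (ltnP (dist e u v) (ds_out e s u)) => Hd.
  have H1 : v \in Bout_s e s u by rewrite /Bout_s inE.
  have H2 : v \in Bin_s e s v by rewrite /Bin_s inE dist_refl.
  by rewrite (disjointFr Hdisj H1) in H2.
have [t [Ht1 Ht2]] := dist_split (j:=(ds_out e s u).-1) Hsc (leq_trans (leq_pred _) Hd).
have Ht : t \in Bout_s e s u by rewrite /Bout_s inE Ht1; lia.
case: (ltnP (dist e t v) (ds_in e s v)) => Hq.
  have H2 : t \in Bin_s e s v by rewrite /Bin_s inE.
  by rewrite (disjointFr Hdisj Ht) in H2.
have [x [Hx1 Hx2]] := dist_step Hsc (leq_trans Hr2 Hq).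
have Hxb : x \in Bin_s e s v by rewrite /Bin_s inE; lia.
move/negP: Hex; apply; apply/existsP; exists t; apply/existsP; exists x.
by rewrite Ht Hxb Hx1.
Qed.

Lemma pair_ok_of (n : nat) (e : rel 'I_n) s a b : strongly_connected e ->
  0 < ds_out e s a -> 0 < ds_in e s b ->
  ds_out e s a + ds_in e s b <= dist e a b -> pair_ok e s a b.
Proof.
move=> Hsc H1 H2 H3; apply/and3P; split.
- apply/negP => /eqP Hab; move: H3; rewrite Hab dist_refl; lia.
- apply/pred0P => x /=; apply/negbTE/negP => /andP [].
  rewrite /Bout_s /Bin_s !inE => Hx1 Hx2.
  have := dist_tri a x b Hsc; lia.
- apply/negP => /existsP [u' /existsP [v' /and3P []]].
  rewrite /Bout_s /Bin_s !inE => Hx1 Hx2 He.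
  have := dist_tri a u' b Hsc; have := dist_tri u' v' b Hsc.
  have := dist_edge Hsc He; lia.
Qed.

Lemma AGG_facts (n : nat) (g : rel 'I_n) s w (S : {set 'I_n}) :
  [/\ ecc_out g w <= AGG g s w S,
      (forall t, t \in Nout g s w -> ecc_in g t <= AGG g s w S) &
      (forall y, y \in S -> ecc_out g y <= AGG g s w S)].
Proof.
rewrite /AGG; split.
- exact: leq_maxl.
- move=> t Ht; apply: leq_trans (leq_maxr _ _); apply: leq_trans (leq_maxl _ _).
  exact: (@leq_bigmax_seq _ _ xpredT (fun u => ecc_in g u) t Ht).
- move=> y Hy; apply: leq_trans (leq_maxr _ _); apply: leq_trans (leq_maxr _ _).
  exact: (@leq_bigmax_cond _ (fun u => u \in S) (fun u => ecc_out g u) y Hy).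
Qed.

Lemma AGG_le (n : nat) (g : rel 'I_n) s w (S : {set 'I_n}) K :
  (forall x, ecc_out g x <= K) -> (forall x, ecc_in g x <= K) -> AGG g s w S <= K.
Proof.
move=> H1 H2; rewrite /AGG !geq_max H1 /=; apply/andP; split.
  by apply/bigmax_leqP_seq => u _ _.
by apply/bigmax_leqP => u _.
Qed.

Lemma key (n : nat) (g : rel 'I_n) s w (S : {set 'I_n}) a b M :
  strongly_connected g -> AGG_choice_ok g s w S -> AGG g s w S <= M ->
  [/\ dist g a b <= M + ds_out g s a,
      (M < dist g a b -> dist g a b + ds_out g s w <= 2 * M + 1) &
      ds_out g s a <= ds_out g s w].
Proof.
move=> Hsc [Hmax Hhit] HM.
case: (AGG_facts g s w S) => F1 F2 F3.
have K1 : dist g a b <= M + ds_out g s a.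
  case/hasP: (Hhit a) => y Hy HyS.
  have := Nout_le Hy; have := F3 y HyS; have := dist_ecc_out g y b.
  have := dist_tri a y b Hsc; lia.
split=> // HMD.
have Hwb : dist g w b <= M by have := dist_ecc_out g w b; lia.
case: (ltnP (dist g w b) (ds_out g s w)) => Hc.
  have := F2 b (Nout_in Hc); have := dist_ecc_in g a b; lia.
have Hpos : 0 < ds_out g s w by have := Hmax a; lia.
have [t [Ht1 Ht2]] := dist_split (j:=(ds_out g s w).-1) Hsc (leq_trans (leq_pred _) Hc).
have Htn : t \in Nout g s w by apply: Nout_in; rewrite Ht1; lia.
have := F2 t Htn; have := dist_ecc_in g a t; have := dist_tri a t b Hsc; lia.
Qed.

Lemma diam_attained (n : nat) (e : rel 'I_n) (w : 'I_n) : exists a b, dist e a b = diam e.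
Proof.
have Hc : 0 < #|'I_n| by rewrite card_ord; apply: n_pos w.
case: (eq_bigmax (fun u => \max_(v : 'I_n) dist e u v) Hc) => a Ha.
case: (eq_bigmax (fun v => dist e a v) Hc) => b Hb.
by exists a, b; rewrite /diam Ha Hb.
Qed.

Theorem lemma8 (n : nat) (e : rel 'I_n) (h z s : nat)
    (w wR : 'I_n) (S SR : {set 'I_n}) :
  strongly_connected e ->
  diam e = 3 * h + z ->
  1 <= h -> z <= 2 ->
  1 <= s <= n ->
  AGG_choice_ok e s w S ->
  AGG_choice_ok (revg e) s wR SR ->
  2 * h + z <= approx_diam e s w S wR SR <= 3 * h + z.
Proof.
move=> Hsc HD Hh Hz Hs Hok HokR.
have HscR := sc_rev Hsc.
have U1 : AGG e s w S <= diam e.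
  by apply: AGG_le => x; rewrite ?ecc_out_diam ?ecc_in_diam.
have U2 : AGG (revg e) s wR SR <= diam e.
  by apply: AGG_le => x; rewrite ?(ecc_out_rev x Hsc) ?(ecc_in_rev x Hsc) ?ecc_out_diam ?ecc_in_diam.
have U3 : pair_term e s <= diam e.
  apply/bigmax_leqP => u _; apply/bigmax_leqP => v Hp.
  exact: pair_bound Hsc Hp.
apply/andP; split; last by rewrite /approx_diam; lia.
set M := approx_diam e s w S wR SR.
have M1 : AGG e s w S <= M by rewrite /M /approx_diam; lia.
have M2 : AGG (revg e) s wR SR <= M by rewrite /M /approx_diam; lia.
have M3 : pair_term e s <= M by rewrite /M /approx_diam; lia.
rewrite leqNgt; apply/negP => HMlt.
have [a [b Hab]] := diam_attained e w.
have [K1 K2 K3] := key a b Hsc Hok M1.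
have [L1 L2 L3] := key b a HscR HokR M2.
rewrite (dist_rev _ _ Hsc) !(ds_out_rev _ _ Hsc) in L1 L2 L3.
have HMD : M < dist e a b by lia.
have K2' := K2 HMD. have L2' := L2 HMD.
have Hpair : pair_ok e s a b.
  apply: (pair_ok_of Hsc); lia.
have : ds_out e s a + ds_in e s b <= M.
  apply: leq_trans M3.
  apply: leq_trans (@leq_bigmax_cond _ (fun v => pair_ok e s a v) (fun v => ds_out e s a + ds_in e s v) b Hpair) _.
  exact: (@leq_bigmax _ (fun u => \max_(v | pair_ok e s u v) (ds_out e s u + ds_in e s v)) a).
lia.
Qed.
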